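(* Let $G=(V,E)$ be a finite connected graph with $n=|V|$ and let $\{u,v\}\in E$ be a bridge, whose removal separates $G$ into two connected components $G_1$, $G_2$ with vertex sets $V_1\ni u$ and $V_2\ni v$. Assume that $DK=n\mathbf{1}_n$ has a unique solution $K_G:V\to\mathbb{R}$ (the Steinerberger curvature of $G$). Then $$\sum_{x\in V_1}K_G(x)=\sum_{y\in V_2}K_G(y).$$
   Context: All graphs are finite, simple, connected and undirected, with the combinatorial shortest-path distance $d$. For $G=(V,E)$ with $V=\{v_1,\dots,v_n\}$, let $D=(d(v_i,v_j))_{i,j=1}^n$ be its distance matrix and $\mathbf{1}_n\in\mathbb{R}^n$ the all-ones column vector. The Steinerberger curvature $K\in\mathbb{R}^n$ (written $K_i$ or $K(v_i)$) is defined as follows: if $DK=n\mathbf{1}_n$ has a unique solution, $K$ is that solution; if it has several solutions, $K$ is a solution for which $\min_i K_i$ is maximal; if it has no solution, $K=nD^\dagger\mathbf{1}_n$ with $D^\dagger$ the Moore–Penrose pseudoinverse. A bridge is an edge whose removal disconnects the graph. *)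

(* Defs.v *)
From mathcomp Require Import all_boot all_order all_algebra.
Set Implicit Arguments. Unset Strict Implicit. Unset Printing Implicit Defensive.
Import Order.TTheory GRing.Theory Num.Theory.

Definition simple_graph (T : finType) (e : rel T) : Prop :=
  irreflexive e /\ symmetric e.

Definition connected_graph (T : finType) (e : rel T) : Prop :=
  forall x y : T, connect e x y.

Fixpoint within (T : finType) (e : rel T) (k : nat) (x y : T) : bool :=
  match k with
  | 0 => x == y
  | k'.+1 => within e k' x y || [exists z, within e k' x z && e z y]
  end.

(* Combinatorial shortest-path distance: the least k such that a walk of
   length <= k exists (searched in 0 .. #|T|-1, which suffices for a
   connected graph). *)
Definition gdist (T : finType) (e : rel T) (x y : T) : nat :=
  find (fun k => within e k x y) (iota 0 #|T|).

Definition remove_edge (T : finType) (e : rel T) (u v : T) : rel T :=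
  fun x y => e x y && ~~ (((x == u) && (y == v)) || ((x == v) && (y == u))).

Definition is_bridge (T : finType) (e : rel T) (u v : T) : Prop :=
  e u v /\ ~~ connect (remove_edge e u v) u v.

Definition side (T : finType) (e : rel T) (u v w : T) : {set T} :=
  [set x | connect (remove_edge e u v) w x].

(* K solves D K = n 1_n, with D the distance matrix (rows/columns indexed by T). *)
Definition solves_curv (R : numDomainType) (T : finType) (e : rel T)
  (K : T -> R) : Prop :=
  forall x : T, (\sum_(y : T) ((gdist e x y)%:R * K y) = (#|T|)%:R)%R.

(* Main.v *)
Require Import Defs.
From mathcomp Require Import all_boot all_order all_algebra.
From mathcomp Require Import lra.
Import Order.TTheory GRing.Theory Num.Theory.

Lemma withinS (T : finType) (e : rel T) k x y :
  within e k.+1 x y = within e k x y || [exists z, within e k x z && e z y].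
Proof. by []. Qed.

Lemma within_mono (T : finType) (e : rel T) k m x y :
  within e k x y -> k <= m -> within e m x y.
Proof.
move=> H /subnK <-; elim: (m - k) => [|d IH] //.
by rewrite addSn withinS IH.
Qed.

Lemma within_cons (T : finType) (e : rel T) k x y w :
  e w x -> within e k x y -> within e k.+1 w y.
Proof.
move=> ewx; elim: k y => [|k IH] y.
  move=> /eqP <-; rewrite withinS; apply/orP; right; apply/existsP; exists w.
  by rewrite /= eqxx ewx.
rewrite (@withinS _ e k) => /orP [H|/existsP [z /andP [Hz ezy]]].
  by rewrite withinS IH.
rewrite withinS; apply/orP; right; apply/existsP; exists z; by rewrite IH.
Qed.

Lemma within_path (T : finType) (e : rel T) x p :
  path e x p -> within e (size p) x (last x p).
Proof.
elim: p x => [|y p IH] x /=; first by rewrite eqxx.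
case/andP=> exy hp; exact: within_cons exy (IH _ hp).
Qed.

Lemma within_bound (T : finType) (e : rel T) x y :
  connect e x y -> exists2 k, k < #|T| & within e k x y.
Proof.
move/connectP=> [p hp ->]; case: (shortenP hp) => p' hp' up' _.
exists (size p'); last exact: within_path.
have := max_card (mem (x :: p')); by rewrite (card_uniqP up').
Qed.

Lemma find_iota_eq (P : pred nat) N i :
  i < N -> P i -> (forall j, j < i -> ~~ P j) -> find P (iota 0 N) = i.
Proof.
move=> iN Pi Hj.
rewrite -(subnKC (ltnW iN)) iotaD find_cat.
have -> : has P (iota 0 i) = false.
  apply/negbTE/hasPn => j; rewrite mem_iota => /andP [_ ji]; exact: Hj.
rewrite size_iota add0n.
case E: (N - i) => [|n]; first by move: iN; rewrite -subn_gt0 E.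
by rewrite /= Pi addn0.
Qed.

Lemma gdist_spec (T : finType) (e : rel T) x y :
  connect e x y ->
  [/\ gdist e x y < #|T|, within e (gdist e x y) x y &
      forall j, j < gdist e x y -> ~~ within e j x y].
Proof.
move=> /within_bound [k kN Hk].
have H : has (fun k => within e k x y) (iota 0 #|T|).
  by apply/hasP; exists k => //; rewrite mem_iota.
have Hs := H; rewrite has_find size_iota in Hs.
split => //.
  have := nth_find 0 H; by rewrite nth_iota // add0n.
move=> j jlt; have := before_find 0 jlt.
by rewrite nth_iota ?add0n => [->|]; last exact: ltn_trans jlt Hs.
Qed.

Lemma key (T : finType) (e e' : rel T) a b :
  symmetric e' ->
  (forall w z, e w z -> ~~ e' w z -> (z == a) || (z == b)) ->
  ~~ connect e' a b ->
  forall k z, connect e' a z -> within e k b z -> (0 < k) && within e k.-1 a z.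
Proof.
move=> sym' Hsub nab; elim=> [|k IH] z az.
  by move=> /eqP bz; move: nab; rewrite bz az.
rewrite withinS => /orP [H|/existsP [w /andP [Hw ewz]]].
  case/andP: (IH _ az H) => k0 Hk /=; apply: within_mono Hk _.
  exact: leq_pred.
case E: (e' w z).
  have aw : connect e' a w.
    by apply: connect_trans az (connect1 _); rewrite sym'.
  case/andP: (IH _ aw Hw) => k0 Hk /=.
  rewrite -(prednK k0) withinS; apply/orP; right; apply/existsP; exists w.
  by rewrite Hk ewz.
case/orP: (Hsub _ _ ewz (negbT E)) => /eqP zab.
  by rewrite /= zab; apply: (@within_mono _ e 0) => //=.
by move: nab; rewrite -zab az.
Qed.

Lemma dist_step (T : finType) (e e' : rel T) a b z :
  symmetric e' ->
  (forall w z, e w z -> ~~ e' w z -> (z == a) || (z == b)) ->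
  ~~ connect e' a b -> e b a -> connected_graph e -> connect e' a z ->
  gdist e b z = (gdist e a z).+1.
Proof.
move=> sym' Hsub nab eba conn az.
case: (@gdist_spec _ e b z (conn b z)) => mN Pm Hlt.
case/andP: (@key _ e e' a b sym' Hsub nab _ _ az Pm) => m0 Pa.
have -> : gdist e a z = (gdist e b z).-1; last by rewrite prednK.
apply: find_iota_eq => //.
- by apply: leq_ltn_trans mN; apply: leq_pred.
- move=> j jlt; apply/negP => Pj.
  have := Hlt j.+1; rewrite (@within_cons _ e _ _ _ _ eba Pj).
  by rewrite -(prednK m0) ltnS jlt => /(_ isT).
Qed.
Local Open Scope ring_scope.
Theorem mainTheorem3 (R : realFieldType) (T : finType) (e : rel T) (u v : T)
  (K : T -> R) :
  simple_graph e -> connected_graph e -> is_bridge e u v ->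
  solves_curv e K ->
  (forall K' : T -> R, solves_curv e K' -> K' =1 K) ->
  \sum_(x in side e u v u) K x = \sum_(y in side e u v v) K y.
Proof.
move=> [irr sym] conn [euv nuv] sol _.
set e' := remove_edge e u v.
have sym' : symmetric e'.
  move=> x y; rewrite /e' /remove_edge sym; congr (_ && ~~ _).
  by rewrite orbC [(y == u) && _]andbC [(y == v) && _]andbC.
have csym : connect_sym e' by apply: sym_connect_sym.
have Hsub : forall w z, e w z -> ~~ e' w z -> (z == u) || (z == v).
  move=> w z ewz; rewrite /e' /remove_edge ewz /= negbK.
  by case/orP => /andP [_ ->] //; rewrite orbT.
have Hsub' : forall w z, e w z -> ~~ e' w z -> (z == v) || (z == u).
  by move=> w z ewz H; rewrite orbC; apply: Hsub ewz H.
have nvu : ~~ connect e' v u by rewrite csym.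
have evu : e v u by rewrite sym.
have dU : forall z, z \in side e u v u -> gdist e v z = (gdist e u z).+1.
  move=> z; rewrite inE => az; exact: (@dist_step _ e e' u v z).
have dV : forall z, z \in side e u v v -> gdist e u z = (gdist e v z).+1.
  move=> z; rewrite inE => az; exact: (@dist_step _ e e' v u z).
have clos : forall p x, connect e' u x || connect e' v x -> path e x p ->
    connect e' u (last x p) || connect e' v (last x p).
  elim=> [|w p IH] x //= Sx /andP [exw hp]; apply: IH hp.
  case E: (e' x w).
    case/orP: Sx => H; apply/orP; [left|right];
      by apply: connect_trans H (connect1 E).
  by case/orP: (Hsub _ _ exw (negbT E)) => /eqP ->; rewrite connect0 ?orbT.
have part : forall y, (y \in side e u v v) = ~~ (y \in side e u v u).
  move=> y; rewrite !inE.
  apply/idP/idP.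
    move=> vy; apply/negP => uy; move: nuv.
    by rewrite (connect_trans uy) // csym.
  move=> nuy.
  have : connect e u y := conn u y.
  case/connectP => p hp yl.
  have := clos p u; rewrite connect0 -yl => /(_ isT hp).
  by rewrite (negbTE nuy).
have Su := sol u; have Sv := sol v.
rewrite (bigID (fun y => y \in side e u v u)) /= in Su.
rewrite (bigID (fun y => y \in side e u v u)) /= in Sv.
have EB : \sum_(y in side e u v v) K y = \sum_(y | ~~ (y \in side e u v u)) K y.
  by apply: eq_bigl => y; rewrite part.
rewrite EB.
have E1 : \sum_(y | y \in side e u v u) (gdist e v y)%:R * K y =
   \sum_(y | y \in side e u v u) (gdist e u y)%:R * K y + \sum_(y | y \in side e u v u) K y.
  rewrite -big_split; apply: eq_bigr => y Hy /=.
  by rewrite dU // -addn1 natrD mulrDl mul1r.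
have E2 : \sum_(y | ~~ (y \in side e u v u)) (gdist e u y)%:R * K y =
   \sum_(y | ~~ (y \in side e u v u)) (gdist e v y)%:R * K y + \sum_(y | ~~ (y \in side e u v u)) K y.
  rewrite -big_split; apply: eq_bigr => y Hy /=.
  by rewrite dV ?part // -addn1 natrD mulrDl mul1r.
rewrite E1 in Sv; rewrite E2 in Su.
lra.
Qed.
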